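(* Let $s\ge2$, let $H$ be a graph, let $k\ge s+1$ and $n\ge s+2$, and let $\{S_X: X\subseteq\{1,\dots,n\},\ |X|=s\}$ be pairwise distinct $(k-1)$-cliques of $H$ such that for every $(s+1)$-subset $A\subseteq\{1,\dots,n\}$ there is a $k$-clique $Q_A$ of $H$ which contains $S_X$ for every $s$-subset $X\subseteq A$ and contains no $S_Y$ with $Y\not\subseteq A$. Then there exist a $(k-s-1)$-clique $T$ of $H$ and pairwise distinct vertices $x_1,\dots,x_n\in V(H)\setminus T$ such that \[ S_X=T\cup\{x_i: i\in X\}\qquad\text{for every $s$-subset } X\subseteq\{1,\dots,n\}. \]
   Context: All graphs are finite, simple, undirected. A $k$-clique of a graph $H$ is a set of $k$ pairwise adjacent vertices of $H$ (a $0$-clique is the empty set). *)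

(* Defs.v *)
From mathcomp Require Import all_boot.
Set Implicit Arguments. Unset Strict Implicit. Unset Printing Implicit Defensive.

Definition simple_graph (V : finType) (e : rel V) : Prop :=
  symmetric e /\ irreflexive e.

Definition is_clique (V : finType) (e : rel V) (K : {set V}) : Prop :=
  forall x y, x \in K -> y \in K -> x != y -> e x y.

Definition is_kclique (V : finType) (e : rel V) (k : nat) (K : {set V}) : Prop :=
  is_clique e K /\ #|K| = k.

(* Main.v *)
From mathcomp Require Import all_boot zify.
Set Implicit Arguments. Unset Strict Implicit. Unset Printing Implicit Defensive.

Lemma sub_of_card (T : finType) (A : {set T}) m :
  m <= #|A| -> exists B : {set T}, B \subset A /\ #|B| = m.
Proof.
elim: m => [|m IH] hm; first by exists set0; rewrite sub0set cards0.
have [B [hBA hB]] := IH (ltnW hm).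
have : #|A :\: B| > 0 by rewrite cardsD (setIidPr hBA); lia.
rewrite card_gt0 => /set0Pn [a]; rewrite inE => /andP [haB haA].
exists (a |: B); split; first by rewrite subUset sub1set haA hBA.
by rewrite cardsU1 haB hB.
Qed.

Lemma card_swap (T : finType) (C : {set T}) i a :
  i \in C -> a \notin C -> #|a |: (C :\ i)| = #|C|.
Proof.
move=> hi ha; rewrite cardsU1 (cardsD1 i C) hi !inE (negbTE ha) andbF /=; lia.
Qed.

Lemma card_add (T : finType) (C : {set T}) a : a \notin C -> #|a |: C| = #|C|.+1.
Proof. by move=> ha; rewrite cardsU1 ha. Qed.

Lemma diff_in (T : finType) (Q A B : {set T}) :
  #|A| = #|B| -> #|Q| = #|B|.+1 -> A \subset Q -> B \subset Q -> A != B ->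
  A :\: B = Q :\: B /\ #|Q :\: B| = 1.
Proof.
move=> hAB hQ hAQ hBQ hne.
have h1 : #|Q :\: B| = 1 by rewrite cardsD (setIidPr hBQ); lia.
split=> //.
have hsub : A :\: B \subset Q :\: B by apply: setSD.
have : #|A :\: B| > 0.
  rewrite card_gt0; apply/negP; rewrite setD_eq0 => hs.
  by move: hne; rewrite eqEcard hs hAB leqnn.
move=> hpos; apply/eqP; rewrite eqEcard hsub h1 //.
Qed.

Lemma card1_eq (T : finType) (A : {set T}) v : #|A| = 1 -> v \in A -> A = [set v].
Proof.
move=> h hv; apply/eqP; rewrite eq_sym eqEcard sub1set hv h cards1 //.
Qed.

Lemma chain (T : finType) (s : nat) (P : {set T} -> Prop) (Y : {set T}) :
  #|Y| = s ->
  (forall (Z : {set T}) j a, #|Z| = s -> j \in Z -> j \notin Y -> a \notin Z -> a \in Y ->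
     P Z -> P (a |: (Z :\ j))) ->
  forall X : {set T}, #|X| = s -> P X -> P Y.
Proof.
move=> hY step X; move hm: #|X :\: Y| => m.
elim: m X hm => [|m IH] X hm hX hP.
  have: X \subset Y by rewrite -setD_eq0 -cards_eq0 hm.
  move=> hs; have e : X = Y by apply/eqP; rewrite eqEcard hs hY hX leqnn.
  by rewrite -e.
have : #|X :\: Y| > 0 by rewrite hm.
rewrite card_gt0 => /set0Pn [j]; rewrite inE => /andP [hjY hjX].
have : #|Y :\: X| > 0.
  rewrite card_gt0; apply/eqP => h0.
  have hs : Y \subset X by rewrite -setD_eq0 h0.
  have : Y = X by apply/eqP; rewrite eqEcard hs hX hY leqnn.
  by move=> e; move: hjY; rewrite e hjX.
rewrite card_gt0 => /set0Pn [a]; rewrite inE => /andP [haX haY].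
apply: (IH (a |: (X :\ j))).
- have -> : (a |: (X :\ j)) :\: Y = (X :\: Y) :\ j.
    apply/setP => z; rewrite !inE.
    case: (z =P a) => [->|_] /=; first by rewrite haY /= andbF.
    by case: (z == j); case: (z \in Y); case: (z \in X).
  move: hm; rewrite (cardsD1 j (X :\: Y)) !inE hjY hjX /=; lia.
- by rewrite card_swap.
- by apply: step.
Qed.

Require Import Defs.

Definition Dif (n : nat) (V : finType) (S : {set 'I_n} -> {set V}) C i a :=
  S C :\: S (a |: (C :\ i)).

Theorem lemma4p20 (V : finType) (e : rel V) (s k n : nat)
  (S : {set 'I_n} -> {set V}) :
  simple_graph e ->
  2 <= s -> s + 1 <= k -> s + 2 <= n ->
  (forall X : {set 'I_n}, #|X| = s -> is_kclique e (k - 1) (S X)) ->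
  (forall X Y : {set 'I_n}, #|X| = s -> #|Y| = s -> X != Y -> S X != S Y) ->
  (forall A : {set 'I_n}, #|A| = s + 1 ->
     exists Q : {set V}, is_kclique e k Q /\
       (forall X : {set 'I_n}, #|X| = s -> X \subset A -> S X \subset Q) /\
       (forall Y : {set 'I_n}, #|Y| = s -> ~~ (Y \subset A) -> ~~ (S Y \subset Q))) ->
  exists (T : {set V}) (x : 'I_n -> V),
    is_kclique e (k - s - 1) T /\
    injective x /\
    (forall i, x i \notin T) /\
    (forall X : {set 'I_n}, #|X| = s -> S X = T :|: x @: X).
Proof.
move=> _ hs2 hsk hsn hcl hdist hQ.
have hcard : forall X : {set 'I_n}, #|X| = s -> #|S X| = k - 1 by move=> X /hcl [].
have L : forall A X Y : {set 'I_n}, #|A| = s + 1 -> #|X| = s -> #|Y| = s ->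
    X \subset A -> Y \subset A -> X != Y ->
    exists Q, S X :\: S Y = Q :\: S Y /\ #|Q :\: S Y| = 1.
  move=> A X Y hA hX hY hXA hYA hne.
  have [Q [[_ hQk] [hin _]]] := hQ A hA.
  exists Q; apply: diff_in.
  - by rewrite hcard // hcard.
  - by rewrite hQk hcard //; lia.
  - exact: hin.
  - exact: hin.
  - exact: hdist.
have L1c : forall A X Y : {set 'I_n}, #|A| = s + 1 -> #|X| = s -> #|Y| = s ->
    X \subset A -> Y \subset A -> X != Y -> #|S X :\: S Y| = 1.
  move=> A X Y hA hX hY hXA hYA hne.
  by have [Q [-> ->]] := L A X Y hA hX hY hXA hYA hne.
have L2 : forall A X1 X2 Y : {set 'I_n}, #|A| = s + 1 -> #|X1| = s -> #|X2| = s -> #|Y| = s ->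
    X1 \subset A -> X2 \subset A -> Y \subset A -> X1 != Y -> X2 != Y ->
    S X1 :\: S Y = S X2 :\: S Y.
  move=> A X1 X2 Y hA hX1 hX2 hY h1 h2 h3 n1 n2.
  have [Q [[_ hQk] [hin _]]] := hQ A hA.
  have [-> _] : S X1 :\: S Y = Q :\: S Y /\ #|Q :\: S Y| = 1.
    by apply: diff_in; rewrite ?hcard ?hQk ?hin //; try lia; apply: hdist.
  have [-> _] : S X2 :\: S Y = Q :\: S Y /\ #|Q :\: S Y| = 1.
    by apply: diff_in; rewrite ?hcard ?hQk ?hin //; try lia; apply: hdist.
  by [].
have La : forall (C : {set 'I_n}) i a b, #|C| = s -> i \in C -> a \notin C ->
    b \notin C -> a != b -> Dif S C i a = Dif S C i b.
  move=> C i a b hC hi ha hb hab.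
  have hAa : #|a |: C| = s + 1 by rewrite card_add // hC addn1.
  have hAb : #|b |: C| = s + 1 by rewrite card_add // hC addn1.
  have hYa : #|a |: (C :\ i)| = s by rewrite card_swap.
  have hYb : #|b |: (C :\ i)| = s by rewrite card_swap.
  have nea : C != a |: (C :\ i).
    by apply/eqP => /setP /(_ a); rewrite !inE eqxx (negbTE ha).
  have neb : C != b |: (C :\ i).
    by apply/eqP => /setP /(_ b); rewrite !inE eqxx (negbTE hb).
  have c1 : #|Dif S C i a| = 1.
    apply: (L1c (a |: C)) => //; first by apply: subsetUr.
    by apply/subsetP => z; rewrite !inE; case: (z == a) => //= /andP [].
  have c2 : #|Dif S C i b| = 1.
    apply: (L1c (b |: C)) => //; first by apply: subsetUr.
    by apply/subsetP => z; rewrite !inE; case: (z == b) => //= /andP [].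
  have hai : a != i by apply: contraNneq ha => ->.
  have hbi : b != i by apply: contraNneq hb => ->.
  have hE : #|a |: (b |: (C :\ i))| = s + 1.
    rewrite card_add ?hYb ?addn1 //.
    by rewrite !inE negb_or hab /= negb_and ha orbT.
  have [Q [_ [hin hout]]] := hQ _ hE.
  have : ~~ (S C \subset Q).
    apply: hout => //; apply/subsetPn; exists i => //.
    rewrite !inE eqxx /=; rewrite eq_sym (negbTE hai) eq_sym (negbTE hbi) //.
  case/subsetPn => v hvC hvQ.
  have hva : v \notin S (a |: (C :\ i)).
    apply: contra hvQ; apply/subsetP; apply: hin => //.
    by apply/subsetP => z; rewrite !inE => /orP [->|->]; rewrite ?orbT.
  have hvb : v \notin S (b |: (C :\ i)).
    apply: contra hvQ; apply/subsetP; apply: hin => //.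
    by apply/subsetP => z; rewrite !inE => /orP [->|->]; rewrite ?orbT.
  rewrite (card1_eq c1 (v := v)); last by rewrite /Dif inE hva.
  by rewrite (card1_eq c2 (v := v)) // /Dif inE hvb.
have LC : forall (C : {set 'I_n}) i j a, #|C| = s -> i \in C -> j \in C ->
    i != j -> a \notin C -> Dif S C i a = Dif S (a |: (C :\ j)) i j.
  move=> C i j a hC hi hj hij ha.
  have hai : a != i by apply: contraNneq ha => ->.
  have haj : a != j by apply: contraNneq ha => ->.
  rewrite /Dif.
  have -> : j |: ((a |: (C :\ j)) :\ i) = a |: (C :\ i).
    apply/setP => z; rewrite !inE.
    case: (z =P j) => [->|hzj]; first by rewrite eq_sym hij hj eq_sym (negbTE haj).
    case: (z =P a) => [->|hza]; first by rewrite hai.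
    by case: (z == i).
  apply: (L2 (a |: C)).
  - by rewrite card_add // hC addn1.
  - by [].
  - by rewrite card_swap.
  - by rewrite card_swap.
  - exact: subsetUr.
  - by apply/subsetP => z; rewrite !inE => /orP [->|/andP [_ ->]]; rewrite ?orbT.
  - by apply/subsetP => z; rewrite !inE => /orP [->|/andP [_ ->]]; rewrite ?orbT.
  - by apply/eqP => /setP /(_ a); rewrite !inE eqxx (negbTE ha).
  - apply/eqP => /setP /(_ i); rewrite !inE eqxx hi eq_sym (negbTE hai) /=.
    by rewrite hij.
have hout : forall X : {set 'I_n}, #|X| = s -> exists a, a \notin X.
  move=> X hX; have : #|~: X| > 0 by rewrite cardsCs card_ord setCK hX; lia.
  by rewrite card_gt0 => /set0Pn [a0]; rewrite inE => ha; exists a0.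
have Hx : forall i, exists v, forall C : {set 'I_n}, #|C| = s -> i \in C ->
    i \in C /\ forall a, a \notin C -> Dif S C i a = [set v].
  move=> i.
  have [B [hB hBc]] : exists B : {set 'I_n}, B \subset [set~ i] /\ #|B| = s.-1.
    apply: sub_of_card; rewrite cardsC1 card_ord; lia.
  have hiB : i \notin B by apply/negP => /(subsetP hB); rewrite !inE eqxx.
  have hC0 : #|i |: B| = s by rewrite card_add // hBc; lia.
  have [a0 ha0] := hout _ hC0.
  have hi0 : i \in i |: B by rewrite !inE eqxx.
  have : #|Dif S (i |: B) i a0| = 1.
    apply: (L1c (a0 |: (i |: B))) => //.
    - by rewrite card_add // hC0 addn1.
    - by rewrite card_swap.
    - exact: subsetUr.
    - by apply/subsetP => z; rewrite !inE => /orP [->|/andP [_ ->]]; rewrite ?orbT.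
    - by apply/eqP => /setP /(_ a0); move: ha0; rewrite !inE eqxx => /negPf ->.
  move/eqP/cards1P => [v hv]; exists v => C hC hiC.
  have hC1 := hC0; apply: (chain (P := fun Z => i \in Z /\ forall a, a \notin Z -> Dif S Z i a = [set v])) hC _ _ hC1 _.
  - move=> Z j a hZ hjZ hjC haZ haC [hiZ hR].
    have hji : j != i by apply: contraNneq hjC => ->.
    have hjZ' : j \notin a |: (Z :\ j).
      by rewrite !inE eqxx /= orbF; apply: contraNneq haZ => <-.
    have hZ' : #|a |: (Z :\ j)| = s by rewrite card_swap.
    have hiZ' : i \in a |: (Z :\ j) by rewrite !inE hiZ (eq_sym i j) hji orbT.
    have E : Dif S (a |: (Z :\ j)) i j = [set v].
      by rewrite -LC // ?hR // eq_sym.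
    split=> // b hb.
    case: (b =P j) => [->|/eqP hbj] //.
    by rewrite (La _ _ _ j) //.
  - split=> // a ha.
    case: (a =P a0) => [->|/eqP haa0] //.
    by rewrite (La _ _ _ a0) //.
have [x hx] := fin_all_exists Hx.
have hin1 : forall i (X : {set 'I_n}), #|X| = s -> i \in X -> x i \in S X.
  move=> i X hX hiX; have [a ha] := hout _ hX.
  have [_ h] := hx i X hX hiX.
  by move: (set11 (x i)); rewrite -(h a ha) /Dif inE => /andP [].
have hout1 : forall i (X : {set 'I_n}), #|X| = s -> i \notin X -> x i \notin S X.
  move=> i X hX hiX.
  have : #|X| > 0 by rewrite hX; lia.
  rewrite card_gt0 => /set0Pn [j hj].
  have hij : i != j by apply: contraNneq hiX => ->.
  have hC : #|i |: (X :\ j)| = s by rewrite card_swap.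
  have hiC : i \in i |: (X :\ j) by rewrite !inE eqxx.
  have hjC : j \notin i |: (X :\ j) by rewrite !inE eqxx /= orbF; rewrite eq_sym.
  have [_ h] := hx i _ hC hiC.
  have E : j |: ((i |: (X :\ j)) :\ i) = X.
    apply/setP => z; rewrite !inE.
    case: (z =P j) => [->|hzj] /=; first by rewrite hj.
    case: (z =P i) => [->|hzi] //=; by apply/esym/negbTE.
  move: (set11 (x i)); rewrite -(h j hjC) /Dif E inE => /andP [].
  by [].
have hinj : injective x.
  move=> i j hxij; apply/eqP; apply/negPn/negP => hij.
  have [B [hB hBc]] : exists B : {set 'I_n}, B \subset ~: [set i; j] /\ #|B| = s.-1.
    apply: sub_of_card; rewrite cardsCs setCK cards2 hij card_ord; lia.
  have hiB : i \notin B by apply/negP => /(subsetP hB); rewrite !inE eqxx.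
  have hjB : j \notin B by apply/negP => /(subsetP hB); rewrite !inE eqxx orbT.
  have hX : #|i |: B| = s by rewrite card_add // hBc; lia.
  have := hin1 i _ hX; rewrite !inE eqxx => /(_ isT).
  by rewrite hxij; apply/negP; apply: hout1 => //; rewrite !inE negb_or hjB eq_sym hij.
have [X0 [_ hX0]] : exists X0 : {set 'I_n}, X0 \subset setT /\ #|X0| = s.
  by apply: sub_of_card; rewrite cardsT card_ord; lia.
have hxX0 : x @: X0 \subset S X0.
  by apply/subsetP => _ /imsetP [i hi ->]; apply: hin1.
have hxc : forall X : {set 'I_n}, #|x @: X| = #|X| by move=> X; rewrite card_imset.
pose T := S X0 :\: x @: X0.
have hTc : #|T| = k - 1 - s.
  by rewrite /T cardsD (setIidPr hxX0) hxc hcard // hX0.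
have hxT : forall i, x i \notin T.
  move=> i; rewrite /T inE negb_and negbK.
  case hi: (i \in X0); first by rewrite (imset_f x hi).
  by rewrite hout1 ?hi ?orbT.
have hTsub : forall Y : {set 'I_n}, #|Y| = s -> T \subset S Y.
  move=> Y hY; have hX1 := hX0; apply: (chain (P := fun Z => T \subset S Z)) hY _ _ hX1 _.
    move=> Z j a hZ hjZ _ haZ _ hTZ; apply/subsetP => t ht.
    have [_ h] := hx j Z hZ hjZ.
    apply/negPn/negP => htn.
    have : t \in Dif S Z j a by rewrite /Dif inE htn (subsetP hTZ).
    rewrite h ?inE // => /eqP et; move: (hxT j); rewrite -et ht.
    by [].
  by rewrite /T subsetDl.
exists T, x; split; [|split=> //; split=> //].
  split; last by rewrite hTc; lia.
  have [hc _] := hcl X0 hX0.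
  move=> u v hu hv huv; apply: hc => //; [exact: (subsetP (subsetDl _ _) _ hu) | exact: (subsetP (subsetDl _ _) _ hv)].
move=> X hX; apply/eqP; rewrite eq_sym eqEcard.
rewrite subUset hTsub //=.
have -> : x @: X \subset S X by apply/subsetP => _ /imsetP [i hi ->]; apply: hin1.
rewrite cardsU hxc hX hTc hcard //.
have -> : T :&: x @: X = set0.
  apply/setP => z; rewrite !inE; apply/negbTE; apply/negP => /andP [hz /imsetP [i _ ez]].
  by move: (hxT i); rewrite -ez /T inE hz.
by rewrite cards0; lia.
Qed.
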